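(* Let $r,u$ be positive integers with $\min\{r,u\}>1$, $q$ a prime power, and $j$ a positive integer. If there exists a block totally nonsingular array $\mathbf{A}\in\mathrm{GL}(\mathbb{F}_q,j)^{r\times u}$, then $j\ge\lceil\max\{\log_q(r+1),\log_q(u+1)\}\rceil$.
   Context: $\mathrm{GL}(\mathbb{F},j)$ is the set of invertible $j\times j$ matrices over $\mathbb{F}$. An $r\times u$ block array $\mathbf{A}=[A_{i,k}]_{i\in[r],k\in[u]}$ with each $A_{i,k}\in\mathrm{GL}(\mathbb{F},j)$ is block totally nonsingular if for all $S\subseteq[r]$, $S'\subseteq[u]$ with $|S|=|S'|$, the $j|S|\times j|S'|$ matrix $[A_{i,k}]_{i\in S,k\in S'}$ is nonsingular. *)

(* Defs.v *)
From HB Require Import structures.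
From mathcomp Require Import all_boot all_order all_algebra all_fingroup all_field.
Set Implicit Arguments. Unset Strict Implicit. Unset Printing Implicit Defensive.
Import GRing.Theory.
Local Open Scope ring_scope.

Definition block_sub (F : fieldType) (r u j k : nat)
  (A : 'I_r -> 'I_u -> 'M[F]_j) (f : 'I_k -> 'I_r) (g : 'I_k -> 'I_u)
  : 'M[F]_(\sum_(a < k) j) :=
  \mxblock_(a < k, b < k) A (f a) (g b).

(* Strictly increasing index maps = sorted enumerations of k-subsets. *)
Definition incr_idx (k n : nat) (f : 'I_k -> 'I_n) : Prop :=
  forall a b : 'I_k, (a < b)%N -> (f a < f b)%N.

Definition block_totally_nonsingular (F : fieldType) (r u j : nat)
  (A : 'I_r -> 'I_u -> 'M[F]_j) : Prop :=
  (forall i l, A i l \in unitmx) /\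
  (forall (k : nat) (f : 'I_k -> 'I_r) (g : 'I_k -> 'I_u),
      incr_idx f -> incr_idx g -> block_sub A f g \in unitmx).

(* Main.v *)
Require Import Defs.
From HB Require Import structures.
From mathcomp Require Import all_boot all_order all_algebra all_fingroup all_field.
Set Implicit Arguments. Unset Strict Implicit. Unset Printing Implicit Defensive.
Import GRing.Theory.
Local Open Scope ring_scope.

Lemma count_bound (F : finFieldType) (j n : nat) (M : 'I_n -> 'M[F]_j) :
  (0 < j)%N -> (forall i, M i \in unitmx) ->
  (forall i i', i != i' -> M i - M i' \in unitmx) -> (n < #|F| ^ j)%N.
Proof.
move=> hj Mu Md.
set v : 'rV[F]_j := const_mx 1.
have v0 : v != 0.
  apply/eqP => /matrixP/(_ 0 (Ordinal hj)); rewrite !mxE; apply/eqP; exact: oner_neq0.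
pose f i := v *m M i.
have finj : injective f.
  move=> i i' /eqP; rewrite -subr_eq0 /f -mulmxBr.
  case: (eqVneq i i') => // /Md Hu /eqP H; exfalso.
  by move: v0; rewrite -(mulmxK Hu v) H mul0mx eqxx.
have hsub : [seq f i | i in 'I_n] \subset predC1 (0 : 'rV[F]_j).
  apply/subsetP => x /imageP [i _ ->] /=.
  apply/negP => /eqP H; move: v0; rewrite -(mulmxK (Mu i) v) -/(f i) H mul0mx eqxx //.
have := subset_leq_card hsub.
rewrite card_image // cardC1 card_mx card_ord mul1n.
have : (0 < #|F| ^ j)%N by rewrite expn_gt0; apply/orP; left; apply/card_gt0P; by exists 0.
by case: (#|F| ^ j)%N.
Qed.
Definition idx2 n (x y : 'I_n) : 'I_2 -> 'I_n := fun a => if val a == 0%N then x else y.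

Lemma incr_idx2 n (x y : 'I_n) : (x < y)%N -> incr_idx (idx2 x y).
Proof.
move=> xy a b; rewrite /idx2.
by case: a => [[|[|a]] Ha] //=; case: b => [[|[|b]] Hb] //=.
Qed.

Lemma rows_lemma (F : fieldType) r u j (A : 'I_r -> 'I_u -> 'M[F]_j)
  (c0 c1 : 'I_u) (hc : (c0 < c1)%N) :
  block_totally_nonsingular A ->
  forall (i i' : 'I_r), (i < i')%N -> forall w : 'cV[F]_j,
  invmx (A i c0) *m A i c1 *m w = invmx (A i' c0) *m A i' c1 *m w -> w = 0.
Proof.
move=> [Au Bu] i i' ii' w E.
have U := Bu 2%N (idx2 i i') (idx2 c0 c1) (incr_idx2 ii') (incr_idx2 hc).
pose C : 'M[F]_(\sum_(a < 2) j, 1) :=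
  \mxcol_(b < 2) (if val b == 0%N then - (invmx (A i c0) *m A i c1 *m w) else w).
have HC : block_sub A (idx2 i i') (idx2 c0 c1) *m C = 0.
  rewrite /block_sub /C mul_mxblock_mxrow -(mxcol0 (p_ := fun _ : 'I_2 => j)).
  apply: eq_mxcol => a; rewrite !big_ord_recr big_ord0 /= /idx2 /=.
  case: (val a == 0%N); rewrite add0r.
  idtac.
    by rewrite mulmxN !mulmxA mulmxV ?Au // mul1mx addNr.
  by rewrite E mulmxN !mulmxA mulmxV ?Au // mul1mx addNr.
have : C = 0 by rewrite -(mulKmx U C) HC mulmx0.
move/(congr1 (fun X => submxcol X (1 : 'I_2))); rewrite mxcolK /=.
by move=> ->; rewrite submxcol0.
Qed.

Lemma cols_lemma (F : fieldType) r u j (A : 'I_r -> 'I_u -> 'M[F]_j)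
  (c0 c1 : 'I_r) (hc : (c0 < c1)%N) :
  block_totally_nonsingular A ->
  forall (l l' : 'I_u), (l < l')%N -> forall x : 'rV[F]_j,
  x *m (A c0 l *m invmx (A c1 l)) = x *m (A c0 l' *m invmx (A c1 l')) -> x = 0.
Proof.
move=> [Au Bu] l l' ll' x E.
have U := Bu 2%N (idx2 c0 c1) (idx2 l l') (incr_idx2 hc) (incr_idx2 ll').
pose C : 'M[F]_(1, \sum_(a < 2) j) :=
  \mxrow_(b < 2) (if val b == 0%N then x else - (x *m (A c0 l *m invmx (A c1 l)))).
have HC : C *m block_sub A (idx2 c0 c1) (idx2 l l') = 0.
  rewrite /block_sub /C mul_mxrow_mxblock -(mxrow0 (q_ := fun _ : 'I_2 => j)).
  apply: eq_mxrow => a; rewrite !big_ord_recr big_ord0 /= /idx2 /=.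
  case: (val a == 0%N); rewrite add0r.
  idtac.
    by rewrite mulNmx -!mulmxA mulVmx ?Au // mulmx1 addrN.
  by rewrite E mulNmx -!mulmxA mulVmx ?Au // mulmx1 addrN.
have : C = 0 by rewrite -(mulmxK U C) HC mul0mx.
move/(congr1 (fun X => submxrow X (0 : 'I_2))); rewrite mxrowK /=.
by move=> ->; rewrite submxrow0.
Qed.

Theorem mainTheorem11 (F : finFieldType) (q : nat) (hq : #|F| = q)
  (r u j : nat) (hr : (0 < r)%N) (hu : (0 < u)%N) (hru : (1 < minn r u)%N)
  (hj : (0 < j)%N)
  (A : 'I_r -> 'I_u -> 'M[F]_j) :
  block_totally_nonsingular A ->
  (up_log q (maxn r.+1 u.+1) <= j)%N.
Proof.
move=> BT.
have q1 : (1 < q)%N.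
  rewrite -hq; apply/card_gt1P; exists 0, 1; split => //; by rewrite eq_sym oner_neq0.
have r1 : (1 < r)%N by move: hru; rewrite leq_min => /andP[].
have u1 : (1 < u)%N by move: hru; rewrite leq_min => /andP[].
have Au := BT.1.
apply: up_log_min => //; rewrite geq_max -hq; apply/andP; split.
- pose c0 : 'I_u := Ordinal hu. pose c1 : 'I_u := Ordinal u1.
  pose M i := invmx (A i c0) *m A i c1.
  have := @count_bound F j r M hj.
  apply.
    by move=> i; rewrite /M unitmx_mul unitmx_inv !Au.
  move=> i i' ii'; rewrite -unitmx_tr -row_free_unit; apply: inj_row_free => v Hv.
  have E : M i *m v^T = M i' *m v^T.
    apply/eqP; rewrite -subr_eq0 -mulmxBl -[_ *m _]trmxK trmx_mul trmxK Hv.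
    by rewrite trmx0.
  suff : v^T = 0 by move/(congr1 trmx); rewrite trmxK trmx0.
  case: (ltngtP i i') => [lt|lt|/val_inj eq]; last by rewrite eq eqxx in ii'.
    exact: (rows_lemma (c0:=c0) (c1:=c1) _ BT lt E).
  exact: (rows_lemma (c0:=c0) (c1:=c1) _ BT lt (esym E)).
- pose c0 : 'I_r := Ordinal hr. pose c1 : 'I_r := Ordinal r1.
  pose N l := A c0 l *m invmx (A c1 l).
  have := @count_bound F j u N hj.
  apply.
    by move=> l; rewrite /N unitmx_mul unitmx_inv !Au.
  move=> l l' ll'; rewrite -row_free_unit; apply: inj_row_free => v Hv.
  have E : v *m N l = v *m N l'.
    by apply/eqP; rewrite -subr_eq0 -mulmxBr Hv.
  case: (ltngtP l l') => [lt|lt|/val_inj eq]; last by rewrite eq eqxx in ll'.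
    exact: (cols_lemma (c0:=c0) (c1:=c1) _ BT lt E).
  exact: (cols_lemma (c0:=c0) (c1:=c1) _ BT lt (esym E)).
Qed.
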